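(* Let $\beta\in\mathcal{A}$. If $\nu^\star\in N_\beta$ is an $X$-circuit of $\mathcal{A}$, then the set $(\nu^\star)^+=\{\alpha\in\mathcal{A}:\nu^\star_\alpha>0\}=\operatorname{supp}\nu^\star\setminus\{\beta\}$ is affinely independent (as a subset of $\mathbb{R}^n$).
   Context: $X\subset\mathbb{R}^n$ is a nonempty closed convex set and $\mathcal{A}\subset\mathbb{R}^n$ is a nonempty finite set. $\mathbb{R}^{\mathcal{A}}$ denotes real vectors indexed by $\mathcal{A}$. $\mathcal{A}$ is viewed as the linear map $\mathbb{R}^{\mathcal{A}}\to\mathbb{R}^n$, $\mathcal{A}\nu=\sum_{\alpha\in\mathcal{A}}\alpha\nu_\alpha$. The support function of $X$ is $\sigma_X(y)=\sup\{y^Tx:x\in X\}\in\mathbb{R}\cup\{+\infty\}$. For $\beta\in\mathcal{A}$, $N_\beta=\{\nu\in\mathbb{R}^{\mathcal{A}}:\nu_\alpha\ge0\ \forall\alpha\neq\beta,\ \sum_{\alpha}\nu_\alpha=0\}$. A vector $\nu^\star\in N_\beta$ is an $X$-circuit of $\mathcal{A}$ if (1) $\nu^\star\neq0$, (2) $\sigma_X(-\mathcal{A}\nu^\star)<\infty$, and (3) $\nu^\star$ cannot be written as a convex combination of two non-proportional vectors $\nu^{(1)},\nu^{(2)}\in N_\beta$ such that the map $\nu\mapsto\sigma_X(-\mathcal{A}\nu)$ is affine on the segment $[\nu^{(1)},\nu^{(2)}]$. *)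

(* Defs.v *)
From HB Require Import structures.
From mathcomp Require Import all_boot all_order all_algebra.
From mathcomp Require Import all_classical all_reals all_analysis.
Set Implicit Arguments. Unset Strict Implicit. Unset Printing Implicit Defensive.
Import Order.TTheory GRing.Theory Num.Theory.
Import numFieldNormedType.Exports.
Local Open Scope classical_set_scope.
Local Open Scope ring_scope.

(* Points of R^n are row vectors 'rV[R]_n.  The finite nonempty set
   A = {a_0,...,a_(m-1)} ⊂ R^n is given by an injective family a : 'I_m -> 'rV_n
   with 0 < m; vectors of R^A are functions 'I_m -> R. *)

Definition dotp (R : realType) (n : nat) (y x : 'rV[R]_n) : R :=
  \sum_(j < n) y 0 j * x 0 j.

Definition convexR (R : realType) (n : nat) (X : set 'rV[R]_n) : Prop :=
  forall x y (t : R), X x -> X y -> 0 <= t -> t <= 1 -> X ((1 - t) *: x + t *: y).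

Definition supportf (R : realType) (n : nat) (X : set 'rV[R]_n) (y : 'rV[R]_n)
  : \bar R := ereal_sup [set (dotp y x)%:E | x in X].

Definition Amap (R : realType) (n m : nat) (a : 'I_m -> 'rV[R]_n)
  (nu : 'I_m -> R) : 'rV[R]_n := \sum_(i < m) nu i *: a i.

Definition Nbeta (R : realType) (m : nat) (b : 'I_m) (nu : 'I_m -> R) : Prop :=
  (forall i, i != b -> 0 <= nu i) /\ \sum_(i < m) nu i = 0.

Definition proportional (R : realType) (m : nat) (u v : 'I_m -> R) : Prop :=
  exists c : R, (u = fun i => c * v i) \/ (v = fun i => c * u i).

Definition segpt (R : realType) (m : nat) (u v : 'I_m -> R) (t : R) : 'I_m -> R :=
  fun i => (1 - t) * u i + t * v i.

Definition sigA (R : realType) (n m : nat) (X : set 'rV[R]_n)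
  (a : 'I_m -> 'rV[R]_n) (nu : 'I_m -> R) : \bar R := supportf X (- Amap a nu).

Definition affine_on_seg (R : realType) (m : nat) (f : ('I_m -> R) -> \bar R)
  (u v : 'I_m -> R) : Prop :=
  (forall t : R, 0 <= t -> t <= 1 -> f (segpt u v t) \is a fin_num) /\
  (forall t : R, 0 <= t -> t <= 1 ->
     f (segpt u v t) = ((1 - t)%:E * f u + t%:E * f v)%E).

Definition Xcircuit (R : realType) (n m : nat) (X : set 'rV[R]_n)
  (a : 'I_m -> 'rV[R]_n) (b : 'I_m) (nu : 'I_m -> R) : Prop :=
  [/\ Nbeta b nu,
      nu <> (fun _ => 0),
      (sigA X a nu < +oo)%E &
      ~ (exists (nu1 nu2 : 'I_m -> R) (l : R),
           Nbeta b nu1 /\ Nbeta b nu2 /\ ~ proportional nu1 nu2 /\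
           0 < l /\ l < 1 /\
           nu = (fun i => l * nu1 i + (1 - l) * nu2 i) /\
           affine_on_seg (sigA X a) nu1 nu2)].

Definition aff_indep (R : realType) (n m : nat) (a : 'I_m -> 'rV[R]_n)
  (S : pred 'I_m) : Prop :=
  forall c : 'I_m -> R,
    \sum_(i < m | S i) c i = 0 -> \sum_(i < m | S i) c i *: a i = 0 ->
    forall i, S i -> c i = 0.

(* Main.v *)
Require Import Defs.
From HB Require Import structures.
From mathcomp Require Import all_boot all_order all_algebra.
From mathcomp Require Import all_classical all_reals all_analysis.
From mathcomp Require Import ring lra.
Import Order.TTheory GRing.Theory Num.Theory.
Import numFieldNormedType.Exports.
Local Open Scope classical_set_scope.
Local Open Scope ring_scope.

Lemma Amap_shift (R : realType) (n m : nat) (a : 'I_m -> 'rV[R]_n)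
  (nu d : 'I_m -> R) (k : R) :
  \sum_(i < m) d i *: a i = 0 ->
  Amap a (fun j => nu j + k * d j) = Amap a nu.
Proof.
move=> hd; rewrite /Amap.
have -> : \sum_(i < m) (nu i + k * d i) *: a i =
   \sum_(i < m) nu i *: a i + \sum_(i < m) (k * d i) *: a i.
  by rewrite -big_split; apply: eq_bigr => j _; rewrite scalerDl.
have -> : \sum_(i < m) (k * d i) *: a i = k *: \sum_(i < m) d i *: a i.
  by rewrite scaler_sumr; apply: eq_bigr => j _; rewrite scalerA.
by rewrite hd scaler0 addr0.
Qed.

Lemma sigA_fin (R : realType) (n m : nat) (X : set 'rV[R]_n)
  (a : 'I_m -> 'rV[R]_n) (nu : 'I_m -> R) :
  X !=set0 -> (sigA X a nu < +oo)%E -> sigA X a nu \is a fin_num.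
Proof.
move=> [x0 Xx0] hlt; rewrite fin_numE; apply/andP; split; last first.
  by rewrite lt_eqF.
apply/eqP => heq.
have : ((dotp (- Amap a nu) x0)%:E <= sigA X a nu)%E.
  by apply: ereal_sup_ubound; exists x0.
by rewrite heq leeNy_eq.
Qed.

Theorem proposition3p4 (R : realType) (n m : nat) (X : set 'rV[R]_n)
  (a : 'I_m -> 'rV[R]_n) (b : 'I_m) (nu : 'I_m -> R) :
  X !=set0 -> closed X -> convexR X ->
  (0 < m)%N -> injective a ->
  Xcircuit X a b nu ->
  aff_indep a (fun i => 0 < nu i).
Proof.
move=> X0 _ _ _ _ [[hpos hsum] hnz hlt hnot].
move=> c hs hA i Pi.
apply/eqP; apply/negPn/negP => ci.
apply: hnot.
have nub : nu b < 0.
  rewrite ltNge; apply/negP => hb; apply: hnz; apply: funext => j.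
  apply: (psumr_eq0P (P := predT)) => // k _.
  by have [->|/hpos] := eqVneq k b.
pose P := fun j => 0 < nu j.
pose d := fun j => if 0 < nu j then c j else 0.
have hdA : \sum_(j < m) d j *: a j = 0.
  rewrite -[RHS]hA (big_mkcond (fun j => 0 < nu j)) /=.
  by apply: eq_bigr => j _; rewrite /d; case: ifP => //; rewrite scale0r.
have hds : \sum_(j < m) d j = 0.
  by rewrite -[RHS]hs (big_mkcond (fun j => 0 < nu j)).
pose S := \sum_(j < m | 0 < nu j) `|c j| / nu j.
have S0 : 0 <= S by apply: sumr_ge0 => j Pj; rewrite divr_ge0 // ltW.
pose eps := (1 + S)^-1.
have eps0 : 0 < eps by rewrite invr_gt0; lra.
have heps : forall j, 0 < nu j -> eps * `|c j| <= nu j.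
  move=> j Pj.
  have h1 : `|c j| / nu j <= S.
    rewrite /S (bigD1 j) //= lerDl; apply: sumr_ge0 => k /andP[Pk _].
    by rewrite divr_ge0 // ltW.
  have h2 : `|c j| <= (1 + S) * nu j.
    rewrite -ler_pdivrMr //; lra.
  rewrite /eps mulrC ler_pdivrMr; last lra.
  by rewrite mulrC.
have hN : forall k, `|k| <= eps -> Nbeta b (fun j => nu j + k * d j).
  move=> k hk; split.
    move=> j jb; rewrite /d; case: ifP => Pj; last first.
      by rewrite mulr0 addr0; apply: hpos.
    have := heps j Pj.
    have : `|k * c j| <= eps * `|c j|.
      by rewrite normrM ler_wpM2r.
    rewrite ler_norml => /andP[h3 _] h4; lra.
  by rewrite big_split /= -mulr_sumr hds mulr0 hsum addr0.
have hsig : forall k, sigA X a (fun j => nu j + k * d j) = sigA X a nu.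
  by move=> k; rewrite /sigA Amap_shift.
have hfin := @sigA_fin R n m X a nu X0 hlt.
have dc : d i = c i by rewrite /d Pi.
have db : d b = 0 by rewrite /d ltNge ltW.
exists (fun j => nu j + eps * d j), (fun j => nu j + (- eps) * d j), (1/2).
split; first by apply: hN; rewrite ger0_norm // ltW.
split; first by apply: hN; rewrite normrN ger0_norm // ltW.
split.
  move=> [k [hk|hk]].
  - have hb := congr1 (fun f => f b) hk; move: hb; rewrite /= db !mulr0 !addr0.
    move=> hb.
    have k1 : k = 1.
      have h0 : (1 - k) * nu b = 0 by rewrite mulrBl mul1r; lra.
      have : 1 - k = 0.
        by move/eqP: h0; rewrite mulf_eq0 (lt_eqF nub) orbF => /eqP.
      lra.
    have hi := congr1 (fun f => f i) hk; move: hi; rewrite /= k1 mul1r dc.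
    move=> hi; have : eps * c i = 0 by lra.
    by move/eqP; rewrite mulf_eq0 (gt_eqF eps0) /= (negbTE ci).
  - have hb := congr1 (fun f => f b) hk; move: hb; rewrite /= db !mulr0 !addr0.
    move=> hb.
    have k1 : k = 1.
      have h0 : (1 - k) * nu b = 0 by rewrite mulrBl mul1r; lra.
      have : 1 - k = 0.
        by move/eqP: h0; rewrite mulf_eq0 (lt_eqF nub) orbF => /eqP.
      lra.
    have hi := congr1 (fun f => f i) hk; move: hi; rewrite /= k1 mul1r dc.
    move=> hi; have : eps * c i = 0 by lra.
    by move/eqP; rewrite mulf_eq0 (gt_eqF eps0) /= (negbTE ci).
split; first lra.
split; first lra.
split.
  by apply: funext => j /=; field.
have hseg : forall t, segpt (fun j => nu j + eps * d j)
    (fun j => nu j + - eps * d j) t = (fun j => nu j + ((1 - 2 * t) * eps) * d j).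
  by move=> t; apply: funext => j; rewrite /segpt; ring.
split=> t _ _; rewrite hseg hsig //.
rewrite !hsig -(fineK hfin) -!EFinM -EFinD; congr (_%:E); ring.
Qed.
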